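(* Let $V$ be a countable set, $\Omega_0$ a finite set, $\Omega=\Omega_0^V$, $q\in\mathbb N$, and let $\Phi=\{\Phi_B\}_{B\Subset V}$ be an absolutely summable potential, i.e. each $\Phi_B:\Omega\to\mathbb R$ is $\mathcal F_B$-measurable and $\sum_{B\Subset V,\,B\ni x}\|\Phi_B\|_\infty<\infty$ for every $x\in V$. For $\Lambda\Subset V$, $\sigma_\Lambda\in\Omega_\Lambda=\Omega_0^\Lambda$ and $\omega_1,\dots,\omega_q\in\Omega$ set $$H_{\Lambda,\Phi}(\sigma_\Lambda;\omega_1,\dots,\omega_q)=\sum_{B\subseteq\Lambda}\Phi_B(\sigma_\Lambda)+\frac1q\sum_{\substack{B\Subset V\\ B\cap\Lambda\ne\emptyset,\ B\cap\Lambda^c\ne\emptyset}}\sum_{i=1}^q\Phi_B(\sigma_\Lambda\omega_{i,\Lambda^c}),$$ and define the Gibbs $q$-specification $\gamma^\Phi=(\gamma^\Phi_\Lambda)_{\Lambda\Subset V}$ by $$\gamma^\Phi_\Lambda(A\mid\omega_1,\dots,\omega_q)=\frac{1}{Z_\Lambda(\omega_1,\dots,\omega_q)}\sum_{\sigma_\Lambda\in\Omega_\Lambda}e^{-H_{\Lambda,\Phi}(\sigma_\Lambda;\omega_1,\dots,\omega_q)}\,\frac1q\sum_{i=1}^q\mathbf 1_A(\sigma_\Lambda\omega_{i,\Lambda^c}),\quad A\in\mathcal F,$$ with $Z_\Lambda(\omega_1,\dots,\omega_q)=\sum_{\sigma_\Lambda\in\Omega_\Lambda}e^{-H_{\Lambda,\Phi}(\sigma_\Lambda;\omega_1,\dots,\omega_q)}$.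 Then $\gamma^\Phi$ is quasilocal.
   Context: $\mathcal F$ is the product $\sigma$-algebra on $\Omega$; $\mathcal F_B$ is the $\sigma$-algebra generated by the coordinates in $B$; a function $\Phi_B$ that is $\mathcal F_B$-measurable is regarded as a function of the configuration on $B$, so $\Phi_B(\sigma_\Lambda)$ makes sense for $B\subseteq\Lambda$. $\sigma_\Lambda\omega_{\Lambda^c}$ is the configuration equal to $\sigma_\Lambda$ on $\Lambda$ and to $\omega$ on $\Lambda^c$. $\Omega$ carries the topology of coordinatewise convergence and $\Omega^q$ the product topology. A family $(\gamma_\Lambda)_{\Lambda\Subset V}$ of kernels is quasilocal if for each $\Lambda\Subset V$ and every event $A\in\mathcal F_\Lambda$ the map $(\omega_1,\dots,\omega_q)\mapsto\gamma_\Lambda(A\mid\omega_1,\dots,\omega_q)$ is continuous on $\Omega^q$. *)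

(* Defs.v *)
From HB Require Import structures.
From mathcomp Require Import all_boot all_order all_algebra finmap.
From mathcomp Require Import all_classical all_reals all_analysis.

Set Implicit Arguments.
Unset Strict Implicit.
Unset Printing Implicit Defensive.

Import Order.TTheory GRing.Theory Num.Theory.
Import numFieldNormedType.Exports.
Local Open Scope classical_set_scope.
Local Open Scope ring_scope.

Definition config (V : Type) (O0 : choiceType) : Type :=
  prod_topology (fun _ : V => discrete_topology O0).

Definition qconfig (V : Type) (O0 : choiceType) (q : nat) : Type :=
  prod_topology (fun _ : 'I_q => config V O0).

Definition coordF (V : choiceType) (O0 : choiceType) (B : {fset V})
  : set (set (config V O0)) :=
  <<s [set E | exists (x : V) (S : set O0),
          x \in B /\ E = (fun w : config V O0 => w x) @^-1` S] >>.

Definition F_measurable (V : choiceType) (O0 : choiceType) (R : realType)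
  (B : {fset V}) (f : config V O0 -> R) : Prop :=
  forall Y : set R, measurable Y -> coordF B (f @^-1` Y).

Definition supnorm (T : Type) (R : realType) (f : T -> R) : \bar R :=
  ereal_sup (range (fun w => (`|f w|)%:E)).

Definition potential (V : choiceType) (O0 : choiceType) (R : realType) :=
  {fset V} -> config V O0 -> R.

Definition abs_summable_potential (V : choiceType) (O0 : choiceType)
  (R : realType) (Phi : potential V O0 R) : Prop :=
  (forall B, F_measurable B (Phi B)) /\
  (forall x : V, (\esum_(B in [set B : {fset V} | x \in B]) supnorm (Phi B) < +oo)%E).

Definition rsum (T : choiceType) (R : realType) (D : set T) (f : T -> R) : R :=
  fine (\esum_(i in D) ((EFin \o f)^\+ i))%E - fine (\esum_(i in D) ((EFin \o f)^\- i))%E.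

Definition glue (V : choiceType) (O0 : choiceType) (L : {fset V})
  (s : {ffun L -> O0}) (w : config V O0) : config V O0 :=
  fun x => if (insub x : option L) is Some y then s y else w x.

Section Gibbs.
Variables (V : choiceType) (O0 : finType) (R : realType).
Variable (Phi : potential V O0 R).

(* Phi_B(sigma_Lambda) for B subset of Lambda: Phi_B evaluated at any
   extension of sigma_Lambda (we use omega_1; independent of the choice
   since Phi_B is F_B-measurable). *)
Definition phi_in (L : {fset V}) (s : {ffun L -> O0}) (B : {fset V}) (q : nat)
  : (qconfig V O0 q) -> R :=
  match q as n return qconfig V O0 n -> R with
  | 0 => fun _ => 0
  | n.+1 => fun ws => Phi B (glue s (ws ord0))
  end.


Definition H (q : nat) (L : {fset V}) (s : {ffun L -> O0}) (ws : qconfig V O0 q) : R :=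
  \sum_(B <- fpowerset L) phi_in s B ws
  + q%:R^-1 * rsum [set B : {fset V} | (B `&` L)%fset != fset0 /\
                                       exists x, x \in B /\ x \notin L]
                   (fun B => \sum_(i < q) Phi B (glue s (ws i))).

Definition Z (q : nat) (L : {fset V}) (ws : qconfig V O0 q) : R :=
  \sum_(s : {ffun L -> O0}) expR (- H s ws).

Definition gamma (q : nat) (L : {fset V}) (A : set (config V O0))
  (ws : qconfig V O0 q) : R :=
  (Z L ws)^-1 * \sum_(s : {ffun L -> O0})
     expR (- H s ws) * (q%:R^-1 * \sum_(i < q) \1_A (glue s (ws i))).

End Gibbs.

Definition quasilocal (V : choiceType) (O0 : choiceType) (R : realType) (q : nat)
  (g : {fset V} -> set (config V O0) -> qconfig V O0 q -> R) : Prop :=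
  forall (L : {fset V}) (A : set (config V O0)), coordF L A ->
    continuous (fun ws : qconfig V O0 q => (g L A ws : R)).

(* Main.v *)
Require Import Defs.
From HB Require Import structures.
From mathcomp Require Import all_boot all_order all_algebra finmap.
From mathcomp Require Import all_classical all_reals all_analysis.
From mathcomp Require Import lra.
Set Implicit Arguments.
Unset Strict Implicit.
Unset Printing Implicit Defensive.
Import Order.TTheory GRing.Theory Num.Theory.
Import numFieldNormedType.Exports.
Local Open Scope classical_set_scope.
Local Open Scope ring_scope.
Section Dep.
Variables (V : choiceType) (O0 : choiceType).

Definition agree (B : {fset V}) (w w' : config V O0) := forall x, x \in B -> w x = w' x.

Lemma coordF_dep (B : {fset V}) (E : set (config V O0)) :
  coordF B E -> forall w w', agree B w w' -> E w -> E w'.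
Proof.
move=> HE.
pose S := [set E : set (config V O0) | forall w w', agree B w w' -> (E w <-> E w')].
suff: S E.
  by move=> SE w w' ag; case: (SE w w' ag).
apply: (smallest_sub _ _ HE).
- split.
  + by move=> w w' _; split.
  + move=> A SA w w' ag /=; split => -[_ nA]; split => // Aw; apply: nA.
      by apply/(SA w w' ag).
    by apply/(SA w w' ag).
  + move=> F SF w w' ag; split => -[n _ Fn]; exists n => //.
      by apply/(SF n w w' ag).
    by apply/(SF n w w' ag).
- move=> E' [x [S0 [xB ->]]] w w' ag /=.
  by rewrite (ag x xB).
Qed.

Lemma meas_dep (R : realType) (B : {fset V}) (f : config V O0 -> R) :
  F_measurable B f -> forall w w', agree B w w' -> f w = f w'.
Proof.
move=> Hf w w' ag.
have := coordF_dep (Hf [set f w] (measurable_set1 _)) ag.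
by move=> /(_ erefl).
Qed.
End Dep.
Section T.
Variables (V O0 : choiceType) (q : nat).
Lemma coord_cont (i : 'I_q) (x : V) : continuous (fun ws : qconfig V O0 q => ws i x).
Proof.
move=> ws.
have h1 := @proj_continuous _ (fun _ : 'I_q => config V O0) i.
have h2 := @proj_continuous _ (fun _ : V => discrete_topology O0) x.
exact: (continuous_comp (h1 ws) (h2 _)).
Qed.
Lemma coord_near (i : 'I_q) (x : V) (ws0 : qconfig V O0 q) : \forall ws \near ws0, ws i x = ws0 i x.
Proof.
have := @coord_cont i x ws0.
move=> H.
apply: (H [set ws0 i x]).
by apply: open_nbhs_nbhs; split => //; exact: discrete_open.
Qed.

Lemma lc_cont (T : topologicalType) (f : qconfig V O0 q -> T) (K : seq ('I_q * V)) :
 (forall ws ws', (forall p, p \in K -> ws p.1 p.2 = ws' p.1 p.2) -> f ws = f ws') -> continuous f.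
Proof.
move=> Hf ws0.
have FF : Filter (nbhs ws0) by exact: nbhs_filter.
have HN : \forall ws \near ws0, forall p, p \in K -> ws p.1 p.2 = ws0 p.1 p.2.
  elim: K {Hf} => [|p K IH]; first by near=> ws => p.
  near=> ws => p'; rewrite inE => /orP[/eqP->|pK].
    by near: ws; exact: coord_near.
  by move: p' pK; near: ws.
move=> A /nbhs_singleton Afx; apply: filterS HN => ws h.
by rewrite /= (Hf ws ws0 h).
Unshelve. all: by end_near.
Qed.
End T.
Section Esum.
Variables (R : realType) (I : choiceType).
Local Open Scope ereal_scope.
Lemma L1 (D : set I) (a : I -> \bar R) (r : seq I) :
  uniq r -> (forall i, i \in r -> D i) -> \sum_(i <- r) a i <= esum D a.
Proof.
move=> ur rD; apply: esum_ge; exists [set` r].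
  by split; [exact: finite_seq | move=> i; exact: rD].
by rewrite -fsbig_seq.
Qed.
Lemma L2 (D : set I) (a : I -> \bar R) y :
  (forall r : seq I, uniq r -> (forall i, i \in r -> D i) -> \sum_(i <- r) a i <= y) ->
  esum D a <= y.
Proof.
move=> H; apply: ge_ereal_sup => _ [X [finX XD] <-].
rewrite fsbig_finite //; apply: H; first exact: fset_uniq.
by move=> i; rewrite in_fset_set // inE; exact: XD.
Qed.
Lemma L3 (D : set I) (a : I -> \bar R) x : x < esum D a ->
  exists r : seq I, [/\ uniq r, forall i, i \in r -> D i & x < \sum_(i <- r) a i].
Proof.
move/ereal_sup_gt => [_ [X [finX XD] <-] lt].
exists (fset_set X); split; first exact: fset_uniq.
  by move=> i; rewrite in_fset_set // inE; exact: XD.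
by rewrite -fsbig_finite.
Qed.
End Esum.
Section ER.
Variables (R : realType) (I : choiceType).
Definition inD (D : set I) (r : seq I) := uniq r /\ (forall i, i \in r -> D i).
Lemma ER (D : set I) (a : I -> R) (M : R) :
  (forall i, D i -> 0 <= a i) ->
  (forall r, inD D r -> \sum_(i <- r) a i <= M) ->
  [/\ esum D (fun i => (a i)%:E) = (fine (esum D (fun i => (a i)%:E)))%:E,
      (forall r, inD D r -> \sum_(i <- r) a i <= fine (esum D (fun i => (a i)%:E))),
      (forall y, (forall r, inD D r -> \sum_(i <- r) a i <= y) -> fine (esum D (fun i => (a i)%:E)) <= y)
    & (forall e, 0 < e -> exists r, inD D r /\ fine (esum D (fun i => (a i)%:E)) - e < \sum_(i <- r) a i)].
Proof.
move=> a0 aM.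
set s := fine _.
have hle : (esum D (fun i => (a i)%:E) <= M%:E)%E.
  by apply: L2 => r ur rD; rewrite sumEFin lee_fin; exact: aM.
have hge : (0 <= esum D (fun i => (a i)%:E))%E.
  by apply: esum_ge0 => i Di; rewrite lee_fin; exact: a0.
have fin : esum D (fun i => (a i)%:E) \is a fin_num.
  by rewrite ge0_fin_numE // (le_lt_trans hle) // ltry.
have es : esum D (fun i => (a i)%:E) = s%:E by rewrite /s fineK.
split => //.
- move=> r [ur rD]; rewrite -lee_fin -es -sumEFin; exact: L1.
- move=> y Hy; rewrite -lee_fin -es; apply: L2 => r ur rD; rewrite sumEFin lee_fin; exact: Hy.
- move=> e e0; have : ((s - e)%:E < esum D (fun i => (a i)%:E))%E.
    by rewrite es lte_fin ltrBlDr ltrDl.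
  move/L3 => [r [ur rD lt]]; exists r; split => //; by rewrite -lte_fin -sumEFin.
Qed.
End ER.
Section Approx.
Variables (R : realType) (I : choiceType).
Lemma sub_sum (r r0 : seq I) (f : I -> R) : uniq r -> uniq r0 ->
  (forall i, i \in r0 -> 0 <= f i) ->
  \sum_(i <- r | i \in r0) f i <= \sum_(i <- r0) f i.
Proof.
move=> ur ur0 f0.
rewrite -big_filter (perm_big [seq i <- r0 | i \in r]).
  rewrite big_filter [X in _ <= X](bigID (fun i => i \in r)) /= lerDl.
  rewrite big_seq_cond; apply: sumr_ge0 => i /andP[ir0 _]; exact: f0.
apply: uniq_perm; rewrite ?filter_uniq // => i; by rewrite !mem_filter andbC.
Qed.

Lemma approx (D : set I) (c : I -> R) (M : R) :
  (forall i, D i -> 0 <= c i) ->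
  (forall r, inD D r -> \sum_(i <- r) c i <= M) ->
  forall e, 0 < e -> exists r0, inD D r0 /\
  forall u : I -> R, (forall i, D i -> 0 <= u i) -> (forall i, D i -> u i <= c i) ->
  \sum_(i <- r0) u i <= fine (esum D (fun i => (u i)%:E)) <= \sum_(i <- r0) u i + e.
Proof.
move=> c0 cM e e0.
have [_ Cub _ Capp] := ER c0 cM.
have [r0 [[ur0 r0D] lt]] := Capp e e0.
exists r0; split => // u u0 uc.
have uM : forall r, inD D r -> \sum_(i <- r) u i <= M.
  move=> r [ur rD]; apply: le_trans (cM r (conj ur rD)).
  by rewrite big_seq [X in _ <= X]big_seq; apply: ler_sum => i ir; exact: uc (rD i ir).
have [_ Sub Sle _] := ER u0 uM.
apply/andP; split; first exact: Sub.
apply: Sle => r [ur rD].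
rewrite (bigID (fun i => i \in r0)) /=.
apply: lerD; first by apply: sub_sum => // i /r0D; exact: u0.
have h1 : \sum_(i <- r0) c i + \sum_(i <- r | i \notin r0) c i <= fine (esum D (fun i => (c i)%:E)).
  rewrite -[X in _ + X]big_filter -big_cat; apply: Cub; split.
    rewrite cat_uniq ur0 filter_uniq // andbT /=.
    by apply/hasPn => i; rewrite mem_filter => /andP[].
  by move=> i; rewrite mem_cat mem_filter => /orP[/r0D//|/andP[_ /rD]].
have h2 : \sum_(i <- r | i \notin r0) u i <= \sum_(i <- r | i \notin r0) c i.
  by rewrite big_seq_cond [X in _ <= X]big_seq_cond; apply: ler_sum => i /andP[/rD Di _]; exact: uc.
lra.
Qed.
End Approx.
Section RsumCont.
Variables (R : realType) (I : choiceType).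
Lemma maxid (x : R) : x = Num.max x 0 - Num.max (- x) 0.
Proof.
have [H1|H1] := leP x 0; have [H2|H2] := leP (- x) 0; lra.
Qed.

Lemma rsum_cont (T : topologicalType) (D : set I) (c : I -> R) (M : R) (h : I -> T -> R) :
  (forall i, D i -> 0 <= c i) ->
  (forall r, inD D r -> \sum_(i <- r) c i <= M) ->
  (forall i t, D i -> `|h i t| <= c i) ->
  (forall r, inD D r -> continuous (fun t => \sum_(i <- r) h i t)) ->
  continuous (fun t => rsum D (fun i => h i t)).
Proof.
move=> c0 cM hc hcont t0.
apply/cvgrPdist_lt => e e0.
have e30 : 0 < e / 3 by apply: divr_gt0.
have [r0 [r0D Happ]] := approx c0 cM e30.
have key : forall t, `|rsum D (fun i => h i t) - \sum_(i <- r0) h i t| <= e / 3.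
  move=> t.
  have hct : forall i, D i -> - c i <= h i t <= c i.
    by move=> i Di; rewrite -ler_norml; exact: hc.
  have up0 : forall i, D i -> 0 <= Num.max (h i t) 0.
    by move=> i Di; rewrite le_max lexx orbT.
  have upc : forall i, D i -> Num.max (h i t) 0 <= c i.
    by move=> i Di; rewrite ge_max (c0 i Di) andbT; case/andP: (hct i Di).
  have un0 : forall i, D i -> 0 <= Num.max (- h i t) 0.
    by move=> i Di; rewrite le_max lexx orbT.
  have unc : forall i, D i -> Num.max (- h i t) 0 <= c i.
    by move=> i Di; rewrite ge_max (c0 i Di) andbT lerNl; case/andP: (hct i Di).
  have /andP[P1 P2] := Happ (fun i => Num.max (h i t) 0) up0 upc.
  have /andP[N1 N2] := Happ (fun i => Num.max (- h i t) 0) un0 unc.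
  rewrite /rsum.
  have -> : esum D ((EFin \o (fun i => h i t))^\+)%E = esum D (fun i => (Num.max (h i t) 0)%:E).
    by apply: eq_esum => i _; rewrite funeposE /= EFin_max.
  have -> : esum D ((EFin \o (fun i => h i t))^\-)%E = esum D (fun i => (Num.max (- h i t) 0)%:E).
    by apply: eq_esum => i _; rewrite funenegE /= EFin_max.
  have -> : \sum_(i <- r0) h i t = \sum_(i <- r0) Num.max (h i t) 0 - \sum_(i <- r0) Num.max (- h i t) 0.
    by rewrite -sumrB; apply: eq_bigr => i _; rewrite -maxid.
  rewrite ler_norml; apply/andP; split; lra.
have := hcont r0 r0D t0.
move/cvgrPdist_lt => /(_ (e / 3) e30) near.
apply: filterS near => t ht.
have k0 := key t0; have k1 := key t.
move: k0 k1 ht; rewrite !ler_norml ltr_norml => /andP[a1 a2] /andP[b1 b2] /andP[d1 d2].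
rewrite ltr_norml; apply/andP; split; lra.
Qed.
End RsumCont.

Section Glue.
Variables (V : choiceType) (O0 : finType).

Lemma glue_out (L B : {fset V}) (s : {ffun L -> O0}) (w w' : config V O0) :
  agree B w w' -> agree B (Defs.glue s w) (Defs.glue s w').
Proof. by move=> h x xB; rewrite /Defs.glue; case: (insub x) => [y|] //; exact: h. Qed.

Lemma glue_in (L : {fset V}) (s : {ffun L -> O0}) (w w' : config V O0) :
  agree L (Defs.glue s w) (Defs.glue s w').
Proof.
move=> x xL; rewrite /Defs.glue; case: insubP => [y _ _ //|].
by rewrite xL.
Qed.

Lemma cont_phi (R : realType) (q : nat) (L B : {fset V}) (s : {ffun L -> O0}) (i : 'I_q)
  (f : config V O0 -> R) : F_measurable B f ->
  continuous (fun ws : qconfig V O0 q => f (Defs.glue s (ws i))).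
Proof.
move=> Hf; apply: (@lc_cont _ _ _ _ _ [seq (i, x) | x <- B]) => ws ws' h.
apply: (meas_dep Hf); apply: glue_out => x xB.
exact: (h (i, x) (map_f _ xB)).
Qed.
End Glue.

Lemma sum_cont (R : realType) (T : topologicalType) (J : Type) (r : seq J) (f : J -> T -> R) :
  (forall j, continuous (f j)) -> continuous (fun t => \sum_(j <- r) f j t).
Proof.
move=> hf; elim: r => [|j r IH] t.
  have -> : (fun t => \sum_(j <- [::]) f j t) = fun _ => 0 by apply: funext => x; rewrite big_nil.
  exact: cvg_cst.
have -> : (fun t => \sum_(j0 <- j :: r) f j0 t) = (fun t => f j t + \sum_(j0 <- r) f j0 t).
  by apply: funext => x; rewrite big_cons.
apply: cvgD; [exact: hf | exact: IH].
Qed.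

Lemma cover_bound (R : realType) (I J : eqType) (r : seq I) (L : seq J) (a : I -> R)
  (P : J -> I -> bool) (bnd : J -> R) : uniq L ->
  (forall i, i \in r -> 0 <= a i) -> (forall i, i \in r -> exists2 x, x \in L & P x i) ->
  (forall x, x \in L -> \sum_(i <- r | P x i) a i <= bnd x) ->
  \sum_(i <- r) a i <= \sum_(x <- L) bnd x.
Proof.
move=> uL a0 cov hb.
apply: (@le_trans _ _ (\sum_(x <- L) \sum_(i <- r | P x i) a i)); last first.
  by rewrite big_seq [X in _ <= X]big_seq; apply: ler_sum => x xL; exact: hb.
under [X in _ <= X]eq_bigr do rewrite big_mkcond.
rewrite exchange_big /= big_seq [X in _ <= X]big_seq; apply: ler_sum => i ir.
have [x0 x0L Px0] := cov i ir.
rewrite (bigD1_seq x0) //= Px0 lerDl; apply: sumr_ge0 => x _.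
by case: ifP => // _; exact: a0.
Qed.

Theorem mainTheorem7 (V : countType) (O0 : finType) (R : realType) (q : nat)
  (Phi : potential V O0 R) :
  (0 < q)%N -> abs_summable_potential Phi ->
  quasilocal (@gamma V O0 R Phi q).
Proof.
case: q => // n _ [Hmeas Hsum] L A HA.
have [[w0 _]|nw] := pselect (exists w : config V O0, True); last first.
  by move=> ws; exfalso; apply: nw; exists (ws ord0).
pose sn B := supnorm (Phi B).
pose sx x := (\esum_(B in [set B : {fset V} | x \in B]) sn B)%E.
have snub : forall B w, ((`|Phi B w|)%:E <= sn B)%E.
  by move=> B w; apply: ereal_sup_ubound; exists w.
have sn0 : forall B, (0 <= sn B)%E.
  by move=> B; apply: le_trans (snub B w0); rewrite lee_fin.
have snx : forall x B, x \in B -> (sn B <= sx x)%E.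
  move=> x B xB; have := @L1 R _ [set B : {fset V} | x \in B] sn [:: B] erefl.
  rewrite big_seq1; apply => i; rewrite inE => /eqP ->; exact: xB.
have sxfin : forall x, sx x \is a fin_num.
  by move=> x; rewrite ge0_fin_numE ?Hsum //; apply: esum_ge0.
have snfin : forall x B, x \in B -> sn B \is a fin_num.
  by move=> x B xB; rewrite ge0_fin_numE // (le_lt_trans (snx x B xB)) ?Hsum.
have Phib : forall x B w, x \in B -> `|Phi B w| <= fine (sn B).
  by move=> x B w xB; rewrite -lee_fin fineK ?(snfin x) //.
have Dx : forall B : {fset V}, (B `&` L)%fset != fset0 /\ (exists x, x \in B /\ x \notin L) ->
    exists2 x, x \in L & x \in B.
  by move=> B [/fset0Pn [x]]; rewrite in_fsetI => /andP[xB xL] _; exists x.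
have Hc : forall s : {ffun L -> O0}, continuous (fun ws : qconfig V O0 n.+1 => Defs.H Phi s ws).
  move=> s ws0; rewrite /Defs.H.
  have FF : Filter (nbhs ws0) by exact: nbhs_filter.
  apply: cvgD.
    apply: (@sum_cont R _ _ (fpowerset L) (fun B ws => phi_in Phi s B ws)) => B ws.
    rewrite /phi_in.
    exact: (@cont_phi V O0 R n.+1 L B s ord0 (Phi B) (Hmeas B) ws).
  apply: cvgM; first exact: cvg_cst.
  apply: (@rsum_cont R _ (qconfig V O0 n.+1) _ (fun B => n.+1%:R * fine (sn B))
     (n.+1%:R * \sum_(x <- L) fine (sx x))
     (fun B ws => \sum_(i < n.+1) Phi B (Defs.glue s (ws i)))).
  - by move=> B _; apply: mulr_ge0 => //; exact: fine_ge0.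
  - move=> r [ur rD]; rewrite -mulr_sumr; apply: ler_wpM2l => //.
    apply: (@cover_bound R _ _ r L _ (fun x B => x \in B)).
    + exact: fset_uniq.
    + by move=> B _; exact: fine_ge0.
    + by move=> B /rD /Dx.
    + move=> x xL; rewrite -lee_fin -sumEFin (fineK (sxfin x)).
      have -> : (\sum_(B <- r | x \in B) (fine (sn B))%:E = \sum_(B <- r | x \in B) sn B)%E.
        by apply: eq_bigr => B xB; rewrite fineK // (snfin x).
      rewrite -big_filter; apply: L1; first exact: filter_uniq.
      by move=> B; rewrite mem_filter => /andP[].
  - move=> B ws /Dx [x xL xB].
    apply: (le_trans (ler_norm_sum _ _ _)).
    apply: (le_trans (ler_sum _ (fun i _ => Phib x B (Defs.glue s (ws i)) xB))).
    by rewrite sumr_const card_ord mulr_natl.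
  - move=> r _; apply: sum_cont => B; apply: sum_cont => i; exact: cont_phi (Hmeas B).
have Kc : forall s : {ffun L -> O0}, continuous (fun ws : qconfig V O0 n.+1 =>
    (n.+1%:R^-1 * \sum_(i < n.+1) \1_A (Defs.glue s (ws i)) : R)).
  move=> s; apply: (@lc_cont V O0 n.+1 R _ [::]) => ws ws' _.
  congr (_ * _); apply: eq_bigr => i _.
  rewrite /indic.
  suff -> : (Defs.glue s (ws i) \in A) = (Defs.glue s (ws' i) \in A) by [].
  apply/idP/idP => /set_mem HH; apply/mem_set.
    exact: (coordF_dep HA (glue_in s (ws i) (ws' i)) HH).
  exact: (coordF_dep HA (glue_in s (ws' i) (ws i)) HH).
have Ec : forall s : {ffun L -> O0}, continuous (fun ws : qconfig V O0 n.+1 => expR (- Defs.H Phi s ws)).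
  move=> s ws.
  have FF : Filter (nbhs ws) by exact: nbhs_filter.
  exact: (@continuous_comp _ _ _ (fun ws => - Defs.H Phi s ws) expR ws (cvgN (Hc s ws)) (@continuous_expR R _)).
move=> ws.
have FF : Filter (nbhs ws) by exact: nbhs_filter.
case: (pickP (fun _ : {ffun L -> O0} => true)) => [s0 _|none]; last first.
  have -> : (fun ws : qconfig V O0 n.+1 => gamma Phi L A ws) = fun _ => 0.
    apply: funext => w; rewrite /gamma [X in _ * X]big1 ?mulr0 // => s _.
    by have := none s.
  exact: cvg_cst.
rewrite /gamma; apply: cvgM.
  apply: cvgV.
    rewrite /Defs.Z (bigD1 s0) //=.
    have h1 := expR_gt0 (- Defs.H Phi s0 ws).
    have h2 : 0 <= \sum_(s | s != s0) expR (- Defs.H Phi s ws).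
      by apply: sumr_ge0 => s _; exact: expR_ge0.
    rewrite gt_eqF //; lra.
  rewrite /Defs.Z; apply: (@sum_cont R _ _ _ (fun s ws => expR (- Defs.H Phi s ws))) => s.
  exact: Ec.
apply: (@sum_cont R _ _ _ (fun s ws => expR (- Defs.H Phi s ws) *
   (n.+1%:R^-1 * \sum_(i < n.+1) \1_A (Defs.glue s (ws i))))) => s w.
have FF' : Filter (nbhs w) by exact: nbhs_filter.
apply: cvgM; [exact: Ec | exact: Kc].
Qed.
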